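(* Let $d\ge1$ and $n_1,\dots,n_d\ge1$ be integers, and let $G$ be the graph consisting of two vertices $v$ and $w$ joined by $d$ chains of lengths $n_1,\dots,n_d$ (the $k$-th chain is a path of $n_k$ edges from $v$ to $w$, and distinct chains share no vertices other than $v,w$). Then the pair $\{v,w\}$ has order $\mathrm{lcm}(n_1,\dots,n_d)\left(\frac1{n_1}+\dots+\frac1{n_d}\right)$.
   Context: Graphs may have multiple edges, no loops. For a graph with vertices $u_1,\dots,u_N$, let $c_{ij}$ ($i\neq j$) be the number of edges joining $u_i,u_j$, $c_{ii}=-\sum_{j\ne i}c_{ij}$, $M=(c_{ij})$. A pair $\{u_i,u_j\}$ has order $h>0$ if there is $S\in\mathbb{Z}^N$ with $MS=h(e_i-e_j)$ and $\gcd(s_1-s_N,\dots,s_{N-1}-s_N)=1$; equivalently, the class of $e_i-e_j$ in $\mathbb{Z}^N/\mathrm{Im}(M)$ has order exactly $h$. *)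

(* Defs.v *)
From HB Require Import structures.
From mathcomp Require Import all_boot all_order all_algebra.
Set Implicit Arguments. Unset Strict Implicit. Unset Printing Implicit Defensive.
Import Order.TTheory GRing.Theory Num.Theory.
Local Open Scope ring_scope.

(* A multigraph (multiple edges, no loops) on a finite vertex type V is given
   by its edge-multiplicity function c : V -> V -> nat; only the values
   c i j with i != j are used. *)

Definition Mentry (V : finType) (c : V -> V -> nat) (i j : V) : int :=
  if i == j then - (\sum_(l | l != i) (c i l)%:Z) else (c i j)%:Z.

Definition Mmul (V : finType) (c : V -> V -> nat) (S : V -> int) (i : V) : int :=
  \sum_(j : V) Mentry c i j * S j.

Definition in_imM (V : finType) (c : V -> V -> nat) (u : V -> int) : Prop :=
  exists S : V -> int, forall i, Mmul c S i = u i.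

Definition hdiff (V : finType) (h : nat) (x y : V) (i : V) : int :=
  h%:Z * ((i == x)%:Z - (i == y)%:Z).

(* the pair {x,y} has order h: the class of e_x - e_y in Z^V / Im(M) has order
   exactly h (h > 0). *)
Definition pair_order (V : finType) (c : V -> V -> nat) (x y : V) (h : nat) : Prop :=
  (0 < h)%N /\ in_imM c (hdiff h x y) /\
  (forall k : nat, (0 < k < h)%N -> ~ in_imM c (hdiff k x y)).

(* Vertices: inl false = v, inl true = w, and inr (k; j) = the (j+1)-th
   vertex of chain k (internal vertices of chain k are positions 1..n_k-1). *)
Definition chainV (d : nat) (n : 'I_d -> nat) : finType :=
  (bool + {k : 'I_d & 'I_(n k).-1})%type.

Definition chain_v (d : nat) (n : 'I_d -> nat) : chainV n := inl false.
Definition chain_w (d : nat) (n : 'I_d -> nat) : chainV n := inl true.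

(* the vertex at position t (0 <= t <= n k) along chain k *)
Definition chain_vertex (d : nat) (n : 'I_d -> nat) (k : 'I_d) (t : nat) : chainV n :=
  if t == 0%N then chain_v n
  else match (insub t.-1 : option 'I_(n k).-1) with
       | Some j => inr (existT (fun k : 'I_d => 'I_(n k).-1) k j)
       | None => chain_w n
       end.

Definition chain_c (d : nat) (n : 'I_d -> nat) (x y : chainV n) : nat :=
  \sum_(k < d) \sum_(t < n k)
     (((@chain_vertex d n k t == x) && (@chain_vertex d n k t.+1 == y))
      || ((@chain_vertex d n k t == y) && (@chain_vertex d n k t.+1 == x))).

(* Main.v *)
Require Import Defs.
From mathcomp Require Import all_boot all_order all_algebra.
From mathcomp Require Import zify lra.
Import GRing.Theory Num.Theory.
Local Open Scope ring_scope.

Lemma Mmul_eq (V : finType) (c : V -> V -> nat) S i :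
  Mmul c S i = \sum_j (c i j)%:Z * (S j - S i).
Proof.
rewrite /Mmul (bigD1 i) //= /Mentry eqxx [RHS](bigD1 i) //= subrr mulr0 add0r.
rewrite mulNr mulr_suml -sumrN addrC -big_split /=.
apply: eq_bigr => j ji; rewrite eq_sym (negbTE ji) mulrBr.
by [].
Qed.

Lemma sum_delta (T : finType) (a : T) (F : T -> int) :
  \sum_j (a == j)%:Z * F j = F a.
Proof.
rewrite (bigD1 a) //= eqxx mul1r big1 ?addr0 // => j ja.
by rewrite eq_sym (negbTE ja) mul0r.
Qed.

Lemma sum_delta' (T : finType) (a : T) (F : T -> int) :
  \sum_j (j == a)%:Z * F j = F a.
Proof.
rewrite -[RHS](@sum_delta T a F); apply: eq_bigr => j _; by rewrite eq_sym.
Qed.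

Lemma sum_delta_ord (m a : nat) (F : nat -> int) : (a < m)%N ->
  \sum_(t < m) ((t : nat) == a)%:Z * F t = F a.
Proof.
move=> am.
rewrite -[RHS]/((fun t : 'I_m => F t) (Ordinal am)) -(@sum_delta' _ (Ordinal am)).
by apply: eq_bigr => j _.
Qed.

Lemma Mmul_chain d (n : 'I_d -> nat) (S : chainV n -> int) x :
  Mmul (@chain_c d n) S x = \sum_k \sum_(t < n k)
    ((chain_vertex n k t == x)%:Z * (S (chain_vertex n k t.+1) - S x)
     + (chain_vertex n k t.+1 == x)%:Z * (S (chain_vertex n k t) - S x)).
Proof.
rewrite Mmul_eq.
under eq_bigr => j _ do rewrite /chain_c -natz natr_sum mulr_suml.
rewrite exchange_big /=; apply: eq_bigr => k _.
under eq_bigr => j _ do rewrite natr_sum mulr_suml.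
rewrite exchange_big /=; apply: eq_bigr => t _.
set a := chain_vertex n k t; set b := chain_vertex n k t.+1.
transitivity (\sum_j ((a == x)%:Z * ((b == j)%:Z * (S j - S x))
                  + (b == x)%:Z * ((a == j)%:Z * (S j - S x)))).
  apply: eq_bigr => j _.
  case: (eqVneq j x) => [->|jx]; first by rewrite subrr !mulr0.
  case: (eqVneq a x) => [ax|ax]; case: (eqVneq b x) => [bx|bx];
  case: (eqVneq a j) => [aj|aj]; case: (eqVneq b j) => [bj|bj]; rewrite natz /=;
  try (by rewrite ?mul0r ?mul1r ?add0r ?addr0);
  exfalso; move: jx; rewrite -?aj -?bj ?ax ?bx ?eqxx //.
rewrite big_split /= -!mulr_sumr !sum_delta.
by [].
Qed.


Lemma P0 d (n : 'I_d -> nat) k : chain_vertex n k 0 = chain_v n.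
Proof. by []. Qed.

Lemma PS_v d (n : 'I_d -> nat) k t : (chain_vertex n k t.+1 == chain_v n) = false.
Proof. by rewrite /chain_vertex /=; case: insub. Qed.

Lemma Pint d (n : 'I_d -> nat) k t (H : (t < (n k).-1)%N) :
  chain_vertex n k t.+1 = inr (existT (fun k : 'I_d => 'I_(n k).-1) k (Ordinal H)).
Proof. by rewrite /chain_vertex /= insubT. Qed.

Lemma Pw d (n : 'I_d -> nat) k t : (n k <= t.+1)%N -> chain_vertex n k t.+1 = chain_w n.
Proof.
move=> H; rewrite /chain_vertex /= insubF //; apply/negbTE; rewrite -leqNgt; lia.
Qed.

Definition tagof d (n : 'I_d -> nat) (x : chainV n) : option ('I_d * nat) :=
  match x with inl _ => None | inr p => Some (projT1 p, nat_of_ord (projT2 p)) end.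

Lemma Ptag d (n : 'I_d -> nat) k t : @tagof d n (chain_vertex n k t) =
  if (0 < t < n k)%N then Some (k, t.-1) else None.
Proof.
case: t => [|t] //=; case: (ltnP t (n k).-1) => H.
  by rewrite Pint /=; have -> : (t.+1 < n k)%N by lia.
have Hw : (n k <= t.+1)%N by lia.
rewrite Pw //=.
by have -> : (t.+1 < n k)%N = false by lia.
Qed.

Lemma P_v d (n : 'I_d -> nat) k t : (chain_vertex n k t == chain_v n) = (t == 0)%N.
Proof. by case: t => [|t] //; rewrite PS_v. Qed.

Lemma P_w d (n : 'I_d -> nat) k t : (t <= n k)%N -> (0 < n k)%N ->
  (chain_vertex n k t == chain_w n) = (t == n k)%N.
Proof.
case: t => [|t] H hk; first by rewrite P0; have -> : (0 == n k)%N = false by lia.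
case: (ltnP t (n k).-1) => H2.
  by rewrite Pint; have -> : (t.+1 == n k)%N = false by lia.
by rewrite Pw ?eqxx //; [have -> : (t.+1 == n k)%N by lia | lia].
Qed.

Lemma P_int d (n : 'I_d -> nat) k t k0 (j : 'I_(n k0).-1) :
  (chain_vertex n k t == inr (existT _ k0 j)) = (k == k0) && (t == j.+1)%N.
Proof.
apply/eqP/andP.
  move=> E; have := @Ptag d n k t; rewrite E /=.
  case: ifP => // Ht [kk jt]; split; [by apply/eqP | apply/eqP; lia].
case=> /eqP kk /eqP ->; subst k; rewrite (@Pint d n k0 _ (ltn_ord j)). congr (inr (existT _ _ _)). by apply: val_inj.
Qed.


Lemma natb_and (b c : bool) : ((b && c) : nat)%:Z = (b : nat)%:Z * (c : nat)%:Z.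
Proof. by case: b; case: c. Qed.

Lemma Mv d (n : 'I_d -> nat) (S : chainV n -> int) : (forall k, 0 < n k)%N ->
  Mmul (@chain_c d n) S (chain_v n) =
  \sum_k (S (chain_vertex n k 1) - S (chain_v n)).
Proof.
move=> hn; rewrite Mmul_chain; apply: eq_bigr => k _.
under eq_bigr => t _ do rewrite P_v PS_v mul0r addr0.
by rewrite (@sum_delta_ord _ _ (fun t => S (chain_vertex n k t.+1) - S (chain_v n))).
Qed.

Lemma Mw d (n : 'I_d -> nat) (S : chainV n -> int) : (forall k, 0 < n k)%N ->
  Mmul (@chain_c d n) S (chain_w n) =
  \sum_k (S (chain_vertex n k (n k).-1) - S (chain_w n)).
Proof.
move=> hn; rewrite Mmul_chain; apply: eq_bigr => k _.
under eq_bigr => t _.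
  rewrite P_w ?(ltnW (ltn_ord t)) // P_w ?(ltn_ord t) //.
  have -> : ((t : nat) == n k) = false by apply/negbTE; rewrite neq_ltn ltn_ord.
  have -> : ((t : nat).+1 == n k) = ((t : nat) == (n k).-1).
    by move: (hn k) => hk; apply/eqP/eqP => H; lia.
  rewrite /= mul0r add0r.
  over.
rewrite (@sum_delta_ord _ _ (fun t => S (chain_vertex n k t) - S (chain_w n))) //.
by have := hn k; lia.
Qed.

Lemma Mint d (n : 'I_d -> nat) (S : chainV n -> int) k0 (j : 'I_(n k0).-1) :
  (forall k, 0 < n k)%N ->
  Mmul (@chain_c d n) S (inr (existT _ k0 j)) =
  (S (chain_vertex n k0 j.+2) - S (inr (existT _ k0 j)))
  + (S (chain_vertex n k0 j) - S (inr (existT _ k0 j))).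
Proof.
move=> hn; rewrite Mmul_chain.
under eq_bigr => k _.
  under eq_bigr => t _ do rewrite !P_int !natb_and -!mulrA -mulrDr.
  rewrite -mulr_sumr.
  over.
rewrite /= (@sum_delta' _ k0 (fun k => \sum_(i < n k)
         (((i : nat) == j.+1)%:Z * (S (chain_vertex n k i.+1) - S (inr (existT _ k0 j))) +
          ((i : nat) == j)%:Z * (S (chain_vertex n k i) - S (inr (existT _ k0 j)))))).
have hj := ltn_ord j.
rewrite big_split /= (@sum_delta_ord _ _ (fun t => S (chain_vertex n k0 t.+1) - S (inr (existT _ k0 j)))); last first.
  by have := hn k0; lia.
rewrite (@sum_delta_ord _ _ (fun t => S (chain_vertex n k0 t) - S (inr (existT _ k0 j)))) //.
by have := hn k0; lia.
Qed.


Lemma hval d (n : 'I_d -> nat) (h : nat) : (forall k, 1 <= n k)%N ->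
  h%:Q = (\big[lcmn/1%N]_(k < d) n k)%:Q * (\sum_(k < d) ((n k)%:Q)^-1) ->
  h = (\sum_(k < d) ((\big[lcmn/1%N]_(k < d) n k) %/ n k))%N.
Proof.
move=> hn; set L := \big[lcmn/1%N]_(k < d) n k => E; rewrite -!pmulrn in E.
apply/eqP; rewrite -(eqr_nat rat) E mulr_sumr natr_sum; apply/eqP/eq_bigr => k _.
by rewrite natf_div //; apply: (biglcmn_sup k).
Qed.

Definition Sdef d (n : 'I_d -> nat) (L : nat) (x : chainV n) : int :=
  match x with
  | inl b => if b then L%:Z else 0
  | inr p => (((nat_of_ord (projT2 p)).+1 * (L %/ n (projT1 p)))%N)%:Z
  end.

Lemma SP d (n : 'I_d -> nat) (L : nat) k t : (n k %| L)%N -> (t <= n k)%N ->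
  @Sdef d n L (chain_vertex n k t) = ((t * (L %/ n k))%N)%:Z.
Proof.
move=> dv; case: t => [|t] H; first by rewrite P0.
case: (ltnP t (n k).-1) => H2; first by rewrite Pint.
rewrite Pw /=; last by lia.
have -> : t.+1 = n k by lia.
by rewrite mulnC divnK.
Qed.

Theorem claim2p6 (d : nat) (n : 'I_d -> nat) (h : nat) :
  (1 <= d)%N -> (forall k, 1 <= n k)%N ->
  h%:Q = (\big[lcmn/1%N]_(k < d) n k)%:Q * (\sum_(k < d) ((n k)%:Q)^-1) ->
  pair_order (@chain_c d n) (chain_v n) (chain_w n) h.
Proof.
move=> hd hn Eh.
have Hh := @hval d n h hn Eh.
set L := \big[lcmn/1%N]_(k < d) n k in Hh.
have dvL : forall k, (n k %| L)%N by move=> k; apply: (biglcmn_sup k).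
have L0 : (0 < L)%N.
  by apply: (big_ind (fun m => 0 < m)%N) => //= a b ha hb; rewrite lcmn_gt0 ha hb.
have q0 : forall k, (0 < L %/ n k)%N.
  by move=> k; rewrite divn_gt0 ?hn // dvdn_leq.
have h0 : (0 < h)%N by rewrite Hh (bigD1 (Ordinal hd)) //= addn_gt0 q0.
have hZ : h%:Z = \sum_k (L %/ n k)%:Z.
  by rewrite Hh -natz natr_sum; apply: eq_bigr => k _; rewrite natz.
split => //; split.
  exists (@Sdef d n L); case=> [[]|[k0 j]].
  - rewrite Mw // /hdiff /= sub0r mulrN1 hZ -sumrN; apply: eq_bigr => k _.
    rewrite SP // ?leq_pred //=.
    have := divnK (dvL k); have := hn k.
    move: (L %/ n k)%N => q. move: (n k) => m. 
    move=> Hm HL; rewrite -HL; case: m Hm {HL} => // m _ /=; nia.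
  - rewrite Mv // /hdiff /= subr0 mulr1 hZ; apply: eq_bigr => k _.
    by rewrite SP ?hn //= subr0 mul1n.
  - have hj := ltn_ord j.
    rewrite Mint // /hdiff /= subrr mulr0 !SP //; last 2 first.
    + by have := hn k0; lia.
    + by have := hn k0; lia.
    move: (L %/ n k0)%N => q; move: (nat_of_ord j) => t.
    nia.
move=> kk /andP[kk0 kkh] [S HS].
set D := S (chain_w n) - S (chain_v n).
have lin : forall k, D = (n k)%:Z * (S (chain_vertex n k 1) - S (chain_v n)).
  move=> k.
  have gint : forall t, (t.+1 < n k)%N -> S (chain_vertex n k t.+2) =
      2 * S (chain_vertex n k t.+1) - S (chain_vertex n k t).
    move=> t ht; have ht' : (t < (n k).-1)%N by lia.
    have := HS (inr (existT _ k (Ordinal ht'))).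
    rewrite Mint // /hdiff /= subrr mulr0 -(@Pint d n k t ht').
    lia.
  have glin : forall t, (t.+1 <= n k)%N ->
      S (chain_vertex n k t) = S (chain_v n) + t%:Z * (S (chain_vertex n k 1) - S (chain_v n)) /\
      S (chain_vertex n k t.+1) = S (chain_v n) + t.+1%:Z * (S (chain_vertex n k 1) - S (chain_v n)).
    elim=> [|t IH] ht.
      by split; [rewrite mul0r addr0 | rewrite mul1r addrC subrK].
    have [IH1 IH2] := IH (ltnW ht).
    split => //; rewrite gint // IH1 IH2; nia.
  have hk := hn k.
  have hk2 : ((n k).-1.+1 <= n k)%N by lia.
  have [_ E] := glin _ hk2.
  rewrite prednK // in E.
  have Ew : chain_vertex n k (n k) = chain_w n by apply/eqP; rewrite P_w.
  by rewrite /D -Ew E addrC addKr.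
have kkE : kk%:Z = \sum_k (S (chain_vertex n k 1) - S (chain_v n)).
  by have := HS (chain_v n); rewrite Mv // /hdiff /= subr0 mulr1 => ->.
have hD : h%:Z * D = L%:Z * kk%:Z.
  rewrite hZ kkE mulr_suml mulr_sumr; apply: eq_bigr => k _.
  by rewrite (lin k) mulrA -PoszM divnK.
have Dpos : 0 < D by nia.
have dvD : forall k, (n k %| `|D|)%N.
  by move=> k; rewrite (lin k) abszM /= dvdn_mulr.
have LD : (L %| `|D|)%N by apply/dvdn_biglcmP => k _; exact: dvD.
have LleD : (L <= `|D|)%N by apply: dvdn_leq => //; rewrite absz_gt0; lia.
have DE : D = (`|D|%N)%:Z by rewrite abszE ger0_norm //; lia.
move: hD LleD; rewrite DE; move: (`|D|%N) => m.
nia.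
Qed.
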